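(* For all integers $k\ge2$ and $m\ge1$, \[u\big((2^k-1)m-k,\;(2^k-1)m\big)=\varepsilon\big((2^k-1)m-k,\;(2^k-1)m\big)=2^{k-1}m.\]
   Context: All matrices are binary. For a nonempty set $S$ of columns of a binary matrix, let $z$ be the sum over the integers of the columns in $S$. $S$ is called $1$-free if no entry of $z$ equals $1$, and even if all entries of $z$ are even. For a binary $m'\times n'$ matrix $A$ with $m'<n'$: $\varepsilon(A)$ is the smallest cardinality of a nonempty even set of columns, and $u(A)$ the smallest cardinality of a nonempty $1$-free set of columns. For $m'<n'$, $\varepsilon(m',n')$ and $u(m',n')$ are the maxima of $\varepsilon(A)$, resp. $u(A)$, over all binary $m'\times n'$ matrices. *)

(* Defs.v *)
From mathcomp Require Import all_boot all_order all_algebra.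
Set Implicit Arguments. Unset Strict Implicit. Unset Printing Implicit Defensive.

Definition colsum (m n : nat) (A : 'M[bool]_(m, n)) (S : {set 'I_n}) (i : 'I_m) : nat :=
  \sum_(j in S) (A i j : nat).

Definition one_free (m n : nat) (A : 'M[bool]_(m, n)) (S : {set 'I_n}) : bool :=
  [forall i, colsum A S i != 1%N].

Definition even_set (m n : nat) (A : 'M[bool]_(m, n)) (S : {set 'I_n}) : bool :=
  [forall i, ~~ odd (colsum A S i)].

(* Smallest cardinality of a nonempty set satisfying P (default n if none;
   for m < n such sets always exist, so the default is never used). *)
Definition min_card (n : nat) (P : {set 'I_n} -> bool) : nat :=
  \big[minn/n]_(S : {set 'I_n} | (S != set0) && P S) #|S|.

Definition epsA (m n : nat) (A : 'M[bool]_(m, n)) : nat := min_card (even_set A).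
Definition uA (m n : nat) (A : 'M[bool]_(m, n)) : nat := min_card (one_free A).

Definition eps_mn (m n : nat) : nat := \max_(A : 'M[bool]_(m, n)) epsA A.
Definition u_mn (m n : nat) : nat := \max_(A : 'M[bool]_(m, n)) uA A.

(* Main.v *)
Require Import Defs.
From mathcomp Require Import all_boot all_order all_algebra.
From mathcomp Require Import zify.
Set Implicit Arguments. Unset Strict Implicit. Unset Printing Implicit Defensive.


Lemma mc_le (n : nat) (P : {set 'I_n} -> bool) (S : {set 'I_n}) :
  S != set0 -> P S -> min_card P <= #|S|.
Proof.
move=> S0 PS; rewrite /min_card -minEnat.
by apply: (Order.TotalTheory.bigmin_le_cond n (P:=fun S => (S != set0) && P S)); rewrite S0 PS.
Qed.

Lemma mc_ge (n : nat) (P : {set 'I_n} -> bool) d :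
  d <= n -> (forall S, S != set0 -> P S -> d <= #|S|) -> d <= min_card P.
Proof.
move=> dn H; rewrite /min_card; elim/big_ind: _ => //.
  by move=> x y Hx Hy; rewrite leq_min Hx Hy.
by move=> S /andP[S0 PS]; apply: H.
Qed.

Lemma mc_le_n (n : nat) (P : {set 'I_n} -> bool) : min_card P <= n.
Proof.
rewrite /min_card; elim/big_ind: _ => //.
- by move=> x y Hx _; rewrite geq_min Hx.
move=> S _; by apply: leq_trans (max_card _) _; rewrite card_ord.
Qed.

Lemma uA_le_epsA m n (A : 'M[bool]_(m, n)) : uA A <= epsA A.
Proof.
rewrite /epsA /min_card; elim/big_ind: _.
- exact: mc_le_n.
- by move=> x y Hx Hy; rewrite leq_min Hx Hy.
move=> S /andP[S0 ES]; apply: mc_le => //.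
apply/forallP => i; move/forallP: ES => /(_ i).
by apply: contra => /eqP ->.
Qed.

Definition syn m n (A : 'M[bool]_(m, n)) (T : {set 'I_n}) : {ffun 'I_m -> bool} :=
  [ffun i => odd (colsum A T i)].

Definition sdiff n (T U : {set 'I_n}) := (T :\: U) :|: (U :\: T).

Lemma in_sdiff n (T U : {set 'I_n}) j : (j \in sdiff T U) = ((j \in T) != (j \in U)).
Proof. by rewrite !inE; case: (j \in T); case: (j \in U). Qed.

Lemma colsum_ind m n (A : 'M[bool]_(m, n)) T i :
  colsum A T i = \sum_j (((j \in T) && A i j) : nat).
Proof. by rewrite /colsum big_mkcond; apply: eq_bigr => j _; case: (j \in T). Qed.

Lemma odd_colsum_sdiff m n (A : 'M[bool]_(m, n)) T U i :
  odd (colsum A (sdiff T U) i) = odd (colsum A T i) (+) odd (colsum A U i).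
Proof.
have E : colsum A T i + colsum A U i =
   colsum A (sdiff T U) i + 2 * \sum_j (((j \in T) && (j \in U) && A i j) : nat).
  rewrite !colsum_ind -big_split big_distrr -big_split; apply: eq_bigr => j _.
  by rewrite in_sdiff; case: (j \in T); case: (j \in U); case: (A i j).
rewrite mul2n in E; have := congr1 odd E; rewrite !oddD odd_double addbF => -> //.
Qed.

Lemma card_sumj n (S : {set 'I_n}) : #|S| = \sum_j ((j \in S) : nat).
Proof. by rewrite -sum1_card big_mkcond; apply: eq_bigr => j _; case: (j \in S). Qed.

Lemma big_fiber m n k (A : 'M[bool]_(m, n)) : m + k <= n ->
  exists s, 2 ^ k <= #|[set T | syn A T == s]|.
Proof.
move=> mkn.
case: (boolP [exists s, 2 ^ k <= #|[set T | syn A T == s]|]) => [/existsP[s Hs]|H];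
  first by exists s.
exfalso.
have Hall : forall s, #|[set T | syn A T == s]| <= (2 ^ k).-1.
  move=> s; rewrite -ltnS prednK ?expn_gt0 // ltnNge; apply/negP => Hs.
  by apply: (negP H); apply/existsP; exists s.
have C : #|{set 'I_n}| = 2 ^ n by rewrite -cardsT -powersetT card_powerset cardsT card_ord.
have E : \sum_(T : {set 'I_n}) 1 = \sum_(s : {ffun 'I_m -> bool}) #|[set T | syn A T == s]|.
  rewrite (partition_big (syn A) predT) //; apply: eq_bigr => s _.
  by rewrite -sum1_card; apply: eq_bigl => T; rewrite inE.
rewrite sum1_card C in E.
have : \sum_(s : {ffun 'I_m -> bool}) #|[set T | syn A T == s]| <=
       \sum_(s : {ffun 'I_m -> bool}) (2 ^ k).-1 by apply: leq_sum => s _; exact: Hall.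
rewrite -E sum_nat_const card_ffun card_bool card_ord.
have : 2 ^ (m + k) <= 2 ^ n by rewrite leq_exp2l.
rewrite expnD.
have : 0 < 2 ^ k by rewrite expn_gt0.
have : 0 < 2 ^ m by rewrite expn_gt0.
nia.
Qed.


Lemma plotkinA n (F : {set {set 'I_n}}) d :
 (forall T U, T \in F -> U \in F -> T != U -> d <= #|sdiff T U|) ->
 #|F| * #|F| * d <= #|F| * d + \sum_(T in F) \sum_(U in F) #|sdiff T U|.
Proof.
move=> H.
have HT : forall T, T \in F -> #|F| * d <= d + \sum_(U in F) #|sdiff T U|.
  move=> T TF; rewrite -sum_nat_const (bigD1 T) //= leq_add2l.
  rewrite [X in _ <= X](bigD1 T) //=; apply: leq_trans (leq_addl _ _).
  by apply: leq_sum => U /andP[UF UT]; apply: H; rewrite // eq_sym.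
rewrite -mulnA -[#|F| * (#|F| * d)]sum_nat_const -[#|F| * d]sum_nat_const -big_split.
apply: leq_sum => T TF; rewrite sum_nat_const; exact: HT.
Qed.

Lemma plotkinB n (F : {set {set 'I_n}}) :
 2 * \sum_(T in F) \sum_(U in F) #|sdiff T U| <= n * (#|F| * #|F|).
Proof.
have E : \sum_(T in F) \sum_(U in F) #|sdiff T U| =
   \sum_j \sum_(T in F) \sum_(U in F) (((j \in T) != (j \in U)) : nat).
  under eq_bigr => T _ do under eq_bigr => U _ do rewrite (card_sumj (sdiff T U)).
  under eq_bigr => T _ do rewrite exchange_big.
  rewrite exchange_big; apply: eq_bigr => j _; apply: eq_bigr => T _.
  by apply: eq_bigr => U _; rewrite in_sdiff.
rewrite E big_distrr /=.
apply: (@leq_trans (\sum_(j : 'I_n) (#|F| * #|F|))); last first.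
  by rewrite sum_nat_const card_ord.
apply: leq_sum => j _.
set a := \sum_(T in F) ((j \in T) : nat).
set c := \sum_(T in F) ((j \notin T) : nat).
have ac : a + c = #|F|.
  rewrite -big_split -sum1_card; apply: eq_bigr => T _; by case: (j \in T).
have inner : forall T : {set 'I_n}, \sum_(U in F) (((j \in T) != (j \in U)) : nat) =
     (j \in T) * c + (j \notin T) * a.
  move=> T; case: (j \in T); rewrite /= ?mul1n ?mul0n ?addn0 ?add0n;
  by apply: eq_bigr => U _; case: (j \in U).
rewrite (eq_bigr _ (fun T _ => inner T)) big_split /= -!big_distrl /= -/a -/c -ac.
clear -a c; move: a c => a c.
case: (leqP a c) => h.
  have [e ->] : exists e, c = a + e by exists (c - a); lia.
  nia.
have [e ->] : exists e, a = c + e by exists (a - c); lia.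
nia.
Qed.


Lemma arith P m M d S : 1 <= P -> 2 * P <= M -> M * M * d <= M * d + S ->
  2 * S <= (2 * P - 1) * m * (M * M) -> d <= P * m.
Proof.
move=> P1 PM H1 H2.
have H3 : M * (2 * M * d) <= M * (2 * d + (2 * P - 1) * m * M) by nia.
have H4 : 2 * M * d <= 2 * d + (2 * P - 1) * m * M.
  by rewrite leq_pmul2l in H3; [exact: H3 | lia].
rewrite leqNgt; apply/negP => H5.
have H6 : (P * m + 1) * (2 * M - 2) <= d * (2 * M - 2) by apply: leq_mul; lia.
nia.
Qed.

Lemma eps_upper k m m' (A : 'M[bool]_(m', (2 ^ k - 1) * m)) :
  1 <= k -> m' + k <= (2 ^ k - 1) * m -> epsA A <= 2 ^ k.-1 * m.
Proof.
move=> k1 Hn.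
have [s Hs] := big_fiber A Hn.
set F := [set T | syn A T == s] in Hs.
have HF : forall T U, T \in F -> U \in F -> T != U -> epsA A <= #|sdiff T U|.
  move=> T U; rewrite !inE => /eqP HT /eqP HU TU.
  apply: mc_le.
    apply/negP => /eqP H0; apply: (negP TU); apply/eqP/setP => j.
    have := in_sdiff T U j; rewrite H0 inE.
    by case: (j \in T); case: (j \in U).
  apply/forallP => i; rewrite odd_colsum_sdiff.
  have := congr1 (fun f : {ffun 'I_m' -> bool} => f i) (etrans HT (esym HU)); rewrite /= !ffunE => ->.
  by rewrite addbb.
have HA := plotkinA HF.
have HB := plotkinB F.
have E2 : 2 ^ k = 2 * 2 ^ k.-1 by rewrite -expnS prednK.
apply: (arith (M := #|F|) (S := \sum_(T in F) \sum_(U in F) #|sdiff T U|)) => //.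
- by rewrite expn_gt0.
- by rewrite -E2.
by rewrite -E2.
Qed.


Lemma core k (P : nat -> bool) : 0 < k ->
  (forall h y, h < k -> 0 < y < 2 ^ h -> P (2 ^ h + y) + P y + P (2 ^ h) != 1) ->
  (exists2 x, 0 < x < 2 ^ k & P x) ->
  2 ^ k.-1 <= \sum_(1 <= x < 2 ^ k) P x.
Proof.
elim: k => [//|k IH] _ Hc [x Hx Px].
case: k IH Hc Hx => [|k] IH Hc Hx.
  rewrite expn1 in Hx *; have x1 : x = 1 by lia.
  by rewrite big_nat1; subst x; rewrite Px.
have Hc' := fun y => Hc k.+1 y (ltnSn _).
have IH' := IH isT (fun h y hk => Hc h y (ltnW hk)).
have EH : 2 ^ k.+1 = 2 * 2 ^ k by rewrite expnS.
have E2 : 2 ^ k.+2 = 2 ^ k.+1 + 2 ^ k.+1 by rewrite expnS mul2n -addnn.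
rewrite E2 in Hx *; rewrite /= in IH' *.
move: (2 ^ k.+1) EH Hx Hc' IH' => H EH Hx Hc' IH'.
clear IH Hc E2.
have H0 : 0 < 2 ^ k by rewrite expn_gt0.
have L1 : 1 <= H by lia.
have L2 : H <= H + H by lia.
have L3 : H < H + H by lia.
rewrite (@big_cat_nat _ _ _ H 1 (H+H) _ _ L1 L2) /= (big_ltn L3).
rewrite -(add1n H) big_addn addnK.
case PH : (P H).
  have Hy : forall y, 1 <= y < H -> 1 <= P y + P (y + H).
    move=> y /Hc'; rewrite PH (addnC y H); case: (P y); case: (P (H + y)) => //.
  have : \sum_(1 <= y < H) 1 <= \sum_(1 <= y < H) (P y + P (y + H)).
    by rewrite big_nat_cond [X in _ <= X]big_nat_cond; apply: leq_sum => z /andP[Hz _]; apply: Hy.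
  rewrite big_split /= sum_nat_const_nat muln1 /=.
  lia.
have Hy : forall y, 1 <= y < H -> P (y + H) = P y.
  move=> y /Hc'; rewrite PH (addnC y H); case: (P y); case: (P (H + y)) => //.
under [X in _ + (_ + X)]eq_big_nat => i Hi do rewrite Hy //.
rewrite add0n.
have : 2 ^ k <= \sum_(1 <= x < H) P x.
  apply: IH'.
  case: (ltnP x H) => xH; first by exists x => //; lia.
  case: (eqVneq x H) => [xeq|xneq]; first by rewrite xeq PH in Px.
  exists (x - H); first lia.
  by rewrite -Hy; [rewrite subnK; lia | lia].
lia.
Qed.


Definition Lk k : seq (nat * nat) := [seq (h, y) | h <- iota 0 k, y <- iota 1 (2 ^ h).-1].

Lemma size_Lk k : size (Lk k) + k + 1 = 2 ^ k.
Proof.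
rewrite /Lk size_allpairs_dep.
elim: k => [//|k IH].
have -> : iota 0 k.+1 = iota 0 k ++ [:: k] by rewrite -addn1 iotaD.
rewrite map_cat sumn_cat /=.
rewrite size_iota addn0 expnS.
have : 0 < 2 ^ k by rewrite expn_gt0.
lia.
Qed.

Lemma mem_Lk k h y : h < k -> 0 < y < 2 ^ h -> (h, y) \in Lk k.
Proof.
move=> hk hy; apply/allpairsPdep; exists h, y; split => //.
  by rewrite mem_iota.
rewrite mem_iota; have : 0 < 2 ^ h by rewrite expn_gt0.
lia.
Qed.

Definition rowfun n N (L : seq (nat * nat)) (i x : nat) : bool :=
  if i < n - N then (x == i + N) || (x == i %% N)
  else let p := nth (0, 0) L (i - (n - N)) in
   [|| x == (2 ^ p.1 + p.2).-1, x == p.2.-1 | x == (2 ^ p.1).-1].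

Definition A0 k m : 'M[bool]_((2 ^ k - 1) * m - k, (2 ^ k - 1) * m) :=
  \matrix_(i, j) rowfun ((2 ^ k - 1) * m) (2 ^ k - 1) (Lk k) i j.

Definition Pn n (S : {set 'I_n}) x := [exists j in S, val j == x].

Lemma sum_eq1 n (S : {set 'I_n}) a : \sum_(j in S) ((val j == a) : nat) = Pn S a.
Proof.
case: (boolP (Pn S a)) => [/existsP[j0 /andP[j0S /eqP j0a]] | H].
  rewrite (bigD1 j0) //= j0a eqxx big1 // => j /andP[jS jj0].
  by rewrite -j0a val_eqE (negbTE jj0).
rewrite big1 // => j jS; case: eqP => // ja; exfalso; apply: (negP H).
by apply/existsP; exists j; rewrite jS ja eqxx.
Qed.

Lemma sum_or2 n (S : {set 'I_n}) a b : a != b ->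
  \sum_(j in S) (((val j == a) || (val j == b)) : nat) = Pn S a + Pn S b.
Proof.
move=> ab; rewrite -!sum_eq1 -big_split; apply: eq_bigr => j _.
by case: (eqVneq (val j) a) => [->|]; rewrite ?(negbTE ab) //=.
Qed.

Lemma sum_or3 n (S : {set 'I_n}) a b c : a != b -> a != c -> b != c ->
  \sum_(j in S) ([|| val j == a, val j == b | val j == c] : nat) = Pn S a + Pn S b + Pn S c.
Proof.
move=> ab ac bc; rewrite -!sum_eq1 -!big_split; apply: eq_bigr => j _.
case: (eqVneq (val j) a) => [->|]; rewrite ?(negbTE ab) ?(negbTE ac) //=.
by case: (eqVneq (val j) b) => [->|]; rewrite ?(negbTE bc) //=.
Qed.


Lemma shift_sum a b (F : nat -> nat) :
  \sum_(a <= x < a + b) F x = \sum_(0 <= x < b) F (x + a).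
Proof. by rewrite -{1}[a]add0n big_addn addKn. Qed.

Lemma u_lower k m : 2 <= k -> 1 <= m -> 2 ^ k.-1 * m <= uA (A0 k m).
Proof.
move=> k2 m1.
have Hk : 0 < 2 ^ k by rewrite expn_gt0.
have kN : k < 2 ^ k by rewrite ltn_expl.
have EK : 2 ^ k = 2 * 2 ^ k.-1 by rewrite -expnS prednK //; lia.
rewrite /uA /A0.
set N := 2 ^ k - 1.
set n := N * m.
have EN : N = 2 ^ k - 1 by [].
have En : n = N * m by [].
have NM : N <= n by rewrite En leq_pmulr.
have dn : 2 ^ k.-1 * m <= n by rewrite En leq_mul2r; apply/orP; right; lia.
clearbody n N.
apply: mc_ge => // S S0 OF.
have Hrow : forall i : 'I_(n - k),
    \sum_(j in S) (rowfun n N (Lk k) i (val j) : nat) != 1.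
  move=> i; move/forallP: OF => /(_ i); rewrite /colsum.
  by under eq_bigr => j _ do rewrite mxE.
have N0 : 0 < N by lia.
have Hpair : forall i0, i0 + N < n -> Pn S (i0 + N) = Pn S (i0 %% N).
  move=> i0 hi0.
  have hi : i0 < n - k by lia.
  have lt1 : i0 < n - N by lia.
  have dis : i0 + N != i0 %% N by have := ltn_pmod i0 N0; lia.
  have := Hrow (Ordinal hi); rewrite /rowfun /= lt1 sum_or2 //.
  by case: (Pn S _); case: (Pn S _).
have Htri : forall h y, h < k -> 0 < y < 2 ^ h ->
    Pn S (2 ^ h + y).-1 + Pn S y.-1 + Pn S (2 ^ h).-1 != 1.
  move=> h y hk hy.
  have mem := mem_Lk hk hy.
  have ht : index (h, y) (Lk k) < size (Lk k) by rewrite index_mem.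
  have sz := size_Lk k.
  have hi : n - N + index (h, y) (Lk k) < n - k by lia.
  have nlt : (n - N + index (h, y) (Lk k) < n - N) = false by lia.
  have := Hrow (Ordinal hi); rewrite /rowfun /= nlt addKn nth_index //=.
  have h0 : 0 < 2 ^ h by rewrite expn_gt0.
  rewrite sum_or3 //; lia.
have Hper : forall c r, r < N -> c * N + r < n -> Pn S (c * N + r) = Pn S r.
  move=> [|c] r hr hc; first by rewrite mul0n add0n.
  rewrite mulSnr in hc *.
  have hc2 : c * N + r + N < n by lia.
  have := Hpair (c * N + r) hc2.
  by rewrite -addnA (addnC r N) addnA => ->; rewrite modnMDl modn_small.
have card1 : #|S| = \sum_(0 <= x < n) Pn S x.
  rewrite card_sumj big_mkord; apply: eq_bigr => j _.
  congr nat_of_bool; apply/idP/existsP => [jS|[j' /andP[j'S /eqP e]]].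
    by exists j; rewrite jS eqxx.
  by rewrite -(val_inj e).
have blocks : forall c, c <= m -> \sum_(0 <= x < c * N) Pn S x = c * \sum_(0 <= x < N) Pn S x.
  elim => [_|c IH hc]; first by rewrite mul0n big_geq.
  rewrite mulSnr (@big_cat_nat _ _ _ (c * N)) //; last by lia.
  rewrite IH; last by lia.
  rewrite (shift_sum (c * N) N) mulSnr; congr (_ + _).
  have : c.+1 * N <= m * N by rewrite leq_mul2r hc orbT.
  rewrite mulSnr (mulnC m) -En => hb.
  apply: eq_big_nat => x hx; rewrite addnC Hper //; lia.
have Esum : \sum_(0 <= x < N) Pn S x = \sum_(1 <= x < 2 ^ k) Pn S x.-1.
  have -> : 2 ^ k = 1 + N by lia.
  by rewrite shift_sum; apply: eq_bigr => x _; rewrite addn1.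
have ex : exists2 x, 0 < x < 2 ^ k & Pn S x.-1.
  case/set0Pn: S0 => j0 j0S.
  exists (j0 %% N).+1; first by have := ltn_pmod j0 N0; lia.
  have hl := ltn_pmod j0 N0.
  have hj : j0 %/ N * N + j0 %% N < n by rewrite -divn_eq; exact: ltn_ord.
  rewrite /= -(Hper (j0 %/ N)) // -divn_eq.
  by apply/existsP; exists j0; rewrite j0S eqxx.
have C := @core k (fun x => Pn S x.-1) (ltnW k2) Htri ex.
have Em : n = m * N by rewrite En mulnC.
rewrite card1 {1}Em blocks // Esum.
by rewrite mulnC leq_mul2l C orbT.
Qed.


Theorem theorem6p3 (k m : nat) (hk : 2 <= k) (hm : 1 <= m) :
  u_mn ((2 ^ k - 1) * m - k) ((2 ^ k - 1) * m) = 2 ^ k.-1 * m /\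
  eps_mn ((2 ^ k - 1) * m - k) ((2 ^ k - 1) * m) = 2 ^ k.-1 * m.
Proof.
have kN : k < 2 ^ k by rewrite ltn_expl.
have kn : (2 ^ k - 1) * m - k + k <= (2 ^ k - 1) * m.
  have : 2 ^ k - 1 <= (2 ^ k - 1) * m by rewrite leq_pmulr.
  lia.
have up : forall A : 'M[bool]_((2 ^ k - 1) * m - k, (2 ^ k - 1) * m),
    epsA A <= 2 ^ k.-1 * m.
  by move=> A; apply: eps_upper => //; lia.
have low := u_lower hk hm.
rewrite /u_mn /eps_mn; split; apply/eqP; rewrite eqn_leq; apply/andP; split.
- by apply/bigmax_leqP => A _; apply: leq_trans (uA_le_epsA A) (up A).
- exact: (bigmax_sup (A0 k m) isT low).
- by apply/bigmax_leqP => A _; apply: up.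
- exact: (bigmax_sup (A0 k m) isT (leq_trans low (uA_le_epsA _))).
Qed.
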